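(* Define periodic sequences $K_j\in\{0,1\}^{\mathbb N}$ by: $K_1=111\dots$ (repeating block $B_1=1$), and for $j\ge1$, $K_{j+1}$ is the periodic sequence with repeating block $B_{j+1}$ of length $2^{j}$ obtained by writing $B_j$ twice and replacing the last symbol by its complement ($0\leftrightarrow1$). Let $K_\infty=\lim_{j\to\infty}K_j$ (each $B_j$ is a prefix of $B_{j+1}$). For a sequence $s=s_1s_2\dots$ let $\tau(s)=\sum_{k\ge1}t_k2^{-k}$ with $t_k=\sum_{i=1}^k s_i\pmod 2$, and write $\tau_\infty=\tau(K_\infty)=0.t_1t_2t_3\dots$ (binary expansion given by these digits $t_k$). For an integer $p\ge1$ with binary expansion $p=\sum_{i\ge0}n_i2^i$, $n_i\in\{0,1\}$, set $s(p)=\sum_{i\ge0}n_i\pmod 2$. Then $t_k=s(p)$ whenever $k=p\cdot2^\ell$ with $\ell\ge0$ and $p\ge1$ odd.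
   Context: Thus $K_2=\overline{10}$, $K_3=\overline{1011}$, $K_4=\overline{10111010}$, and $K_\infty=1011\,1010\,1011\,1011\dots$; $K_\infty$ is also the fixed point beginning with $1$ of the substitution $1\mapsto10$, $0\mapsto11$. *)

(* Defs.v *)
(* Sequences in {0,1}^N are functions nat -> bool
   (true = 1, false = 0), indexed from 1 (index 0 is unused). *)
From mathcomp Require Import all_boot.
Set Implicit Arguments. Unset Strict Implicit. Unset Printing Implicit Defensive.

(* Blocks B_j for j >= 1: B_1 = [1]; B_{j+1} = B_j B_j with last symbol
   complemented.  (B 0 is an unused dummy equal to B 1.) *)
Fixpoint B (j : nat) : seq bool :=
  match j with
  | 0 => [:: true]
  | 1 => [:: true]
  | j'.+1 => let b := B j' ++ B j' in
             set_nth false b (size b).-1 (~~ nth false b (size b).-1)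
  end.

Definition K (j : nat) (i : nat) : bool :=
  nth false (B j) ((i.-1) %% size (B j)).

Definition is_limit_K (Kinf : nat -> bool) : Prop :=
  forall i, 1 <= i -> exists J, forall j, J <= j -> K j i = Kinf i.

(* t_k(s) = s_1 + ... + s_k (mod 2), the k-th binary digit of tau(s). *)
Definition tdigit (s : nat -> bool) (k : nat) : bool :=
  odd (\sum_(1 <= i < k.+1) nat_of_bool (s i)).

Definition bindigit (p i : nat) : bool := odd (p %/ 2 ^ i).

(* s(p) = sum of binary digits of p (mod 2); digits with i > p vanish. *)
Definition sdig (p : nat) : bool :=
  odd (\sum_(i < p.+1) nat_of_bool (bindigit p i)).

(* Main.v *)
Require Import Defs.
From mathcomp Require Import all_boot zify.
Set Implicit Arguments. Unset Strict Implicit.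
Set Warnings "-notation-overridden".

Definition S p N := \sum_(i < N) nat_of_bool (bindigit p i).

Lemma S_stable p M N : p < 2 ^ M -> M <= N -> S p N = S p M.
Proof.
move=> hp; elim: N => [|N IH] hMN.
  by have -> : M = 0 by lia.
case: (ltnP N M) => hNM.
  by have -> : M = N.+1 by lia.
rewrite /S big_ord_recr /= -/(S p N) IH //.
have -> : bindigit p N = false.
  rewrite /bindigit divn_small //.
  by apply: (leq_trans hp); rewrite leq_exp2l.
by rewrite addn0.
Qed.

Lemma sdigS p N : p < 2 ^ N -> sdig p = odd (S p N).
Proof.
move=> hp; rewrite /sdig -/(S p p.+1).
have hp1 : p < 2 ^ p.+1 by apply: (leq_trans (ltn_expl p (isT : 1 < 2))); rewrite leq_exp2l.
rewrite -(S_stable hp1 (leq_maxr N p.+1)) -(S_stable hp (leq_maxl N p.+1)) //.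
Qed.

Lemma sdig0 : sdig 0 = false.
Proof. by rewrite /sdig big_ord1 /bindigit div0n. Qed.

Lemma sdig_top j r : r < 2 ^ j -> sdig (2 ^ j + r) = ~~ sdig r.
Proof.
move=> hr.
have h1 : 2 ^ j + r < 2 ^ j.+1 by rewrite expnS; lia.
rewrite (sdigS h1) (sdigS hr) /S big_ord_recr /=.
have -> : bindigit (2 ^ j + r) j = true.
  by rewrite /bindigit -{1}(mul1n (2 ^ j)) divnMDl ?expn_gt0 // divn_small.
rewrite oddD addbT; congr (~~ odd _).
apply: eq_bigr => i _; congr nat_of_bool.
rewrite /bindigit.
have hi : i <= j by apply: ltnW.
have -> : 2 ^ j = 2 ^ (j - i) * 2 ^ i by rewrite -expnD subnK.
rewrite divnMDl ?expn_gt0 // oddD oddX /=.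
rewrite subn_eq0 leqNgt ltn_ord /=.
by [].
Qed.

Lemma sdig_double p : sdig p.*2 = sdig p.
Proof.
have hp : p < 2 ^ p.+1 by apply: (leq_trans (ltn_expl p (isT : 1 < 2))); rewrite leq_exp2l.
have hp2 : p.*2 < 2 ^ p.+2 by rewrite expnS mul2n ltn_double.
rewrite (sdigS hp) (sdigS hp2) /S big_ord_recl.
rewrite {1}/bindigit expn0 divn1 odd_double add0n.
congr odd; apply: eq_bigr => i _; congr nat_of_bool.
rewrite /bindigit /bump /=.
by rewrite /bump leq0n add1n expnS -mul2n divnMl.
Qed.

Lemma sdig_pow p l : sdig (p * 2 ^ l) = sdig p.
Proof.
elim: l => [|l IH]; first by rewrite muln1.
by rewrite expnS mulnCA mul2n sdig_double.
Qed.

Lemma B_SS j : B j.+2 = let b := B j.+1 ++ B j.+1 in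
  set_nth false b (size b).-1 (~~ nth false b (size b).-1).
Proof. by []. Qed.

Lemma size_B j : size (B j.+1) = 2 ^ j.
Proof.
elim: j => [|j IH]; first by [].
rewrite B_SS /= size_set_nth size_cat IH expnS.
have h := expn_gt0 2 j; apply/eqP; rewrite eqn_leq; apply/andP; split; lia.
Qed.

Lemma nth_B j n : n < 2 ^ j -> nth false (B j.+1) n = sdig n (+) sdig n.+1.
Proof.
elim: j n => [|j IH] n hn.
  have -> : n = 0 by rewrite expn0 in hn; lia.
  by rewrite /= sdig0 /sdig big_ord_recr /= big_ord1 /bindigit.
have hpos : 0 < 2 ^ j by rewrite expn_gt0.
rewrite B_SS; move: (B j.+1) (size_B j) IH => b hb IH /=.
rewrite size_cat hb nth_set_nth /= !nth_cat hb.
have e2 : 2 ^ j.+1 = 2 ^ j + 2 ^ j by rewrite expnS; lia.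
rewrite e2 in hn.
case: (ltnP n (2 ^ j)) => h1.
  have -> : (n == (2 ^ j + 2 ^ j).-1) = false by apply/negbTE; lia.
  exact: IH.
have -> : (2 ^ j + 2 ^ j).-1 < 2 ^ j = false by apply/negbTE; lia.
have -> : (2 ^ j + 2 ^ j).-1 - 2 ^ j = (2 ^ j).-1 by lia.
have hn' : n = 2 ^ j + (n - 2 ^ j) by lia.
case: eqP => hE.
  rewrite IH; last by lia.
  have -> : ((2 ^ j).-1).+1 = 2 ^ j + 0 by lia.
  rewrite sdig_top // sdig0.
  rewrite hn' sdig_top; last by lia.
  have -> : (2 ^ j + (n - 2 ^ j)).+1 = 2 ^ j.+1 + 0 by rewrite expnS; lia.
  rewrite sdig_top ?expn_gt0 // sdig0.
  have -> : n - 2 ^ j = (2 ^ j).-1 by lia.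
  by case: (sdig _).
rewrite IH; last by lia.
have -> : sdig n = ~~ sdig (n - 2 ^ j) by rewrite {1}hn' sdig_top //; lia.
have -> : n.+1 = 2 ^ j + (n - 2 ^ j).+1 by lia.
rewrite sdig_top; last by lia.
by case: (sdig _); case: (sdig _).
Qed.

Lemma Kinf_val Kinf n : is_limit_K Kinf -> Kinf n.+1 = sdig n (+) sdig n.+1.
Proof.
move=> hK; have [J HJ] := hK n.+1 (ltn0Sn n).
rewrite -(HJ (maxn J n).+1); last by rewrite leqW // leq_maxl.
rewrite /K size_B /= modn_small; last first.
  apply: (leq_trans (ltn_expl n (isT : 1 < 2))); rewrite leq_exp2l //; exact: leq_maxr.
apply: nth_B.
apply: (leq_trans (ltn_expl n (isT : 1 < 2))); rewrite leq_exp2l //; exact: leq_maxr.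
Qed.

Lemma tdigit_sdig Kinf k : is_limit_K Kinf -> tdigit Kinf k = sdig k.
Proof.
move=> hK; elim: k => [|k IH].
  by rewrite /tdigit big_geq // sdig0.
rewrite /tdigit big_nat_recr //= oddD -/(tdigit Kinf k) IH Kinf_val //.
by case: (sdig _); case: (sdig _).
Qed.

Theorem proposition3 (Kinf : nat -> bool) (p l : nat) :
  is_limit_K Kinf -> 1 <= p -> odd p ->
  tdigit Kinf (p * 2 ^ l) = sdig p.
Proof. by move=> hK _ _; rewrite tdigit_sdig // sdig_pow. Qed.
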